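(* Let $\alpha_1,\dots,\alpha_4$ be constants, $H=H(t,t^-,q,q^-,p,p^-)$ smooth, and $X=\xi\partial_t+\eta\partial_q+\nu\partial_p$ (coefficients functions of $(t,q,p)$) such that $\Omega=0$. Let $C$ and $P$ be as defined below. If, on the solutions of the local extremal equation $F_H=\xi\frac{\delta\tilde H}{\delta t}+\eta\frac{\delta\tilde H}{\delta q}+\nu\frac{\delta\tilde H}{\delta p}=0$, one has $D(C)=(S_+-1)W$ for some function $W(t,t^-,q,q^-,p,p^-,\dot q,\dot q^-,\dot p,\dot p^-)$, then $J=P-W$ is a difference first integral, i.e. $(S_+-1)J=0$ on the solutions of $F_H=0$.
   Context: Constant delay $\tau>0$; $t^\pm=t\pm\tau$, $f^\pm=f(t\pm\tau)$; scalar $q,p$. $S_\pm$ are the forward/backward shift operators on expressions; $\xi^\pm=S_\pm(\xi)$ etc.; $H^+=S_+(H)$. $D$ is the total derivative acting on variables at $t^-,t,t^+$. $\tilde H=p^{-}(\alpha_{1}\dot{q}+\alpha_{2}\dot{q}^{-})+p(\alpha_{3}\dot{q}+\alpha_{4}\dot{q}^{-})-H$; $\frac{\delta\tilde H}{\delta p}=\alpha_1\dot q^++(\alpha_2+\alpha_3)\dot q+\alpha_4\dot q^--\partial_p(H+H^+)$, $\frac{\delta\tilde H}{\delta q}=-\big(\alpha_4\dot p^++(\alpha_2+\alpha_3)\dot p+\alpha_1\dot p^-+\partial_q(H+H^+)\big)$, $\frac{\delta\tilde H}{\delta t}=D[\alpha_2(p\dot q-p^-\dot q^-)+\alpha_4(p^+\dot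 q-p\dot q^-)]+D(H)-\partial_t(H+H^+)$. $\Omega=\nu^{-}(\alpha_{1}\dot{q}+\alpha_{2}\dot{q}^{-})+p^{-}(\alpha_{1}D(\eta)+\alpha_{2}D(\eta^{-}))+\nu(\alpha_{3}\dot{q}+\alpha_{4}\dot{q}^{-})+p(\alpha_{3}D(\eta)+\alpha_{4}D(\eta^{-}))+(\alpha_{2}p^{-}+\alpha_{4}p)\dot{q}^{-}D(\xi-\xi^{-})-\xi H_t-\eta H_q-\nu H_p-\xi^{-}H_{t^-}-\eta^{-}H_{q^-}-\nu^{-}H_{p^-}-HD(\xi)$. $C=\eta(\alpha_{4}p^{+}+(\alpha_{2}+\alpha_{3})p+\alpha_{1}p^{-})-\xi\big(\alpha_{2}(p\dot{q}-p^{-}\dot{q}^{-})+\alpha_{4}(p^{+}\dot{q}-p\dot{q}^{-})+H\big)$, $P=(\alpha_{2}p^{-}+\alpha_{4}p)D(\eta^{-})+\nu^{-}(\alpha_{1}\dot{q}+\alpha_{2}\dot{q}^{-})-(\alpha_{2}p^{-}+\alpha_{4}p)\dot{q}^{-}D(\xi^{-})-\xi^{-}H_{t^-}-\eta^{-}H_{q^-}-\nu^{-}H_{p^-}$. Equations are considered with $t^+-t=t-t^-=\tau$. *)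

(* Defs.v *)
From HB Require Import structures.
From mathcomp Require Import all_boot all_order all_algebra.
From mathcomp Require Import all_classical all_reals all_analysis.
Set Implicit Arguments. Unset Strict Implicit. Unset Printing Implicit Defensive.
Import Order.TTheory GRing.Theory Num.Theory.
Import numFieldNormedType.Exports.
Local Open Scope ring_scope.

Section Defs.
Variable R : realType.

Fixpoint iter_dir (V : normedModType R) (vs : seq V) (f : V -> R) : V -> R :=
  if vs is v :: vs' then 'D_v (iter_dir vs' f) else f.

Definition smoothV (V : normedModType R) (f : V -> R) : Prop :=
  forall (vs : seq V) (x : V), differentiable (iter_dir vs f) x.

Definition uncurry3 (f : R -> R -> R -> R) (x : 'rV[R]_3) : R :=
  f (x ord0 (inord 0)) (x ord0 (inord 1)) (x ord0 (inord 2)).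
Definition uncurry6 (f : R -> R -> R -> R -> R -> R -> R) (x : 'rV[R]_6) : R :=
  f (x ord0 (inord 0)) (x ord0 (inord 1)) (x ord0 (inord 2))
    (x ord0 (inord 3)) (x ord0 (inord 4)) (x ord0 (inord 5)).

Definition smooth1 (f : R -> R) : Prop :=
  forall (n : nat) (x : R), derivable (iter n (@derive1 R R) f) x 1.
Definition smooth3 (f : R -> R -> R -> R) : Prop := smoothV (uncurry3 f).
Definition smooth6 (f : R -> R -> R -> R -> R -> R -> R) : Prop :=
  smoothV (uncurry6 f).

Definition Hfun := R -> R -> R -> R -> R -> R -> R.
Definition H_t   (H : Hfun) a b c d e f := derive1 (fun x => H x b c d e f) a.
Definition H_tm  (H : Hfun) a b c d e f := derive1 (fun x => H a x c d e f) b.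
Definition H_q   (H : Hfun) a b c d e f := derive1 (fun x => H a b x d e f) c.
Definition H_qm  (H : Hfun) a b c d e f := derive1 (fun x => H a b c x e f) d.
Definition H_p   (H : Hfun) a b c d e f := derive1 (fun x => H a b c d x f) e.
Definition H_pm  (H : Hfun) a b c d e f := derive1 (fun x => H a b c d e x) f.

Variables (tau a1 a2 a3 a4 : R) (H : Hfun) (xi eta nu : R -> R -> R -> R)
          (q p : R -> R).

Definition atH (G : Hfun) (t : R) : R :=
  G t (t - tau) (q t) (q (t - tau)) (p t) (p (t - tau)).
Definition atX (c : R -> R -> R -> R) (t : R) : R := c t (q t) (p t).
Definition atXm (c : R -> R -> R -> R) (t : R) : R := atX c (t - tau).

Definition qd := derive1 q.
Definition pd := derive1 p.
Definition Dtot (f : R -> R) (t : R) : R := derive1 f t.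

Definition Omega (t : R) : R :=
  atXm nu t * (a1 * qd t + a2 * qd (t - tau))
  + p (t - tau) * (a1 * Dtot (atX eta) t + a2 * Dtot (atXm eta) t)
  + atX nu t * (a3 * qd t + a4 * qd (t - tau))
  + p t * (a3 * Dtot (atX eta) t + a4 * Dtot (atXm eta) t)
  + (a2 * p (t - tau) + a4 * p t) * qd (t - tau)
      * Dtot (fun s => atX xi s - atXm xi s) t
  - atX xi t * atH (H_t H) t - atX eta t * atH (H_q H) t
  - atX nu t * atH (H_p H) t
  - atXm xi t * atH (H_tm H) t - atXm eta t * atH (H_qm H) t
  - atXm nu t * atH (H_pm H) t
  - atH H t * Dtot (atX xi) t.

Definition Gterm (t : R) : R :=
  a2 * (p t * qd t - p (t - tau) * qd (t - tau))
  + a4 * (p (t + tau) * qd t - p t * qd (t - tau)).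

(* variational derivatives of tilde H along the trajectory;
   note  d_t (H + H^+) = H_t + (H_{t^-})^+, etc. *)
Definition varH_t (t : R) : R :=
  Dtot Gterm t + Dtot (atH H) t - (atH (H_t H) t + atH (H_tm H) (t + tau)).
Definition varH_q (t : R) : R :=
  - (a4 * pd (t + tau) + (a2 + a3) * pd t + a1 * pd (t - tau)
     + (atH (H_q H) t + atH (H_qm H) (t + tau))).
Definition varH_p (t : R) : R :=
  a1 * qd (t + tau) + (a2 + a3) * qd t + a4 * qd (t - tau)
  - (atH (H_p H) t + atH (H_pm H) (t + tau)).

Definition F_H (t : R) : R :=
  atX xi t * varH_t t + atX eta t * varH_q t + atX nu t * varH_p t.

Definition C_int (t : R) : R :=
  atX eta t * (a4 * p (t + tau) + (a2 + a3) * p t + a1 * p (t - tau))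
  - atX xi t * (Gterm t + atH H t).

Definition P_int (t : R) : R :=
  (a2 * p (t - tau) + a4 * p t) * Dtot (atXm eta) t
  + atXm nu t * (a1 * qd t + a2 * qd (t - tau))
  - (a2 * p (t - tau) + a4 * p t) * qd (t - tau) * Dtot (atXm xi) t
  - atXm xi t * atH (H_tm H) t - atXm eta t * atH (H_qm H) t
  - atXm nu t * atH (H_pm H) t.

Definition Wfun := R -> R -> R -> R -> R -> R -> R -> R -> R -> R -> R.
Definition atW (W : Wfun) (t : R) : R :=
  W t (t - tau) (q t) (q (t - tau)) (p t) (p (t - tau))
    (qd t) (qd (t - tau)) (pd t) (pd (t - tau)).

End Defs.

(* Main.v *)
Require Import Defs.
From HB Require Import structures.
From mathcomp Require Import all_boot all_order all_algebra.
From mathcomp Require Import all_classical all_reals all_analysis.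
From mathcomp Require Import ring lra.
Import Order.TTheory GRing.Theory Num.Theory.
Import numFieldNormedType.Exports.
Local Open Scope ring_scope.

Section Aux.
Context {R : realType}.
Implicit Types (f g : R -> R) (t c a : R).

Lemma d1_shift f c t : derive1 (fun s => f (s + c)) t = derive1 f (t + c).
Proof. by rewrite /derive1; under eq_fun do rewrite -addrA. Qed.



Lemma dv_shift f c t : derivable f (t + c) 1 -> derivable (fun s => f (s + c)) t 1.
Proof.
move=> H; have -> : (fun s => f (s + c)) = f \o (fun s => s + c) by [].
apply/derivable1_diffP; apply: differentiable_comp.
  apply/derivable1_diffP; apply: derivableD; [exact: derivable_id|exact: derivable_cst].
by apply/derivable1_diffP.
Qed.

Lemma dv_add f g t : derivable f t 1 -> derivable g t 1 -> derivable (fun s => f s + g s) t 1.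
Proof. exact: derivableD. Qed.
Lemma dv_sub f g t : derivable f t 1 -> derivable g t 1 -> derivable (fun s => f s - g s) t 1.
Proof. exact: derivableB. Qed.
Lemma dv_mul f g t : derivable f t 1 -> derivable g t 1 -> derivable (fun s => f s * g s) t 1.
Proof. exact: derivableM. Qed.
Lemma dv_cst a t : derivable (fun _ : R => a) t 1.
Proof. exact: derivable_cst. Qed.
Lemma dv_id t : derivable (fun s : R => s) t 1.
Proof. exact: derivable_id. Qed.

Lemma d1_add f g t : derivable f t 1 -> derivable g t 1 ->
  derive1 (fun s => f s + g s) t = derive1 f t + derive1 g t.
Proof. by move=> ? ?; rewrite !derive1E; apply: deriveD. Qed.
Lemma d1_sub f g t : derivable f t 1 -> derivable g t 1 ->
  derive1 (fun s => f s - g s) t = derive1 f t - derive1 g t.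
Proof. by move=> ? ?; rewrite !derive1E; apply: deriveB. Qed.
Lemma d1_mul f g t : derivable f t 1 -> derivable g t 1 ->
  derive1 (fun s => f s * g s) t = f t * derive1 g t + g t * derive1 f t.
Proof. by move=> ? ?; rewrite !derive1E; apply: deriveM. Qed.
Lemma d1_cst a t : derive1 (fun _ : R => a) t = 0.
Proof. by rewrite derive1E; apply: derive_cst. Qed.

Lemma diff_row n (fs : seq (R -> R)) t :
  (forall j : nat, derivable (nth (fun _ => 0) fs j) t 1) ->
  differentiable (fun s => \row_(j < n) nth (fun _ => 0) fs j s) t.
Proof.
move=> hd.
have E : (fun s => \row_(j < n) nth (fun _ => 0) fs j s) =
   (fun s => \sum_(j <- index_enum 'I_n) nth (fun _ => 0) fs j s *: delta_mx 0 j).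
  apply/funext => s; rewrite [LHS]row_sum_delta; apply: eq_bigr => j _.
  by rewrite mxE.
rewrite E; elim: (index_enum _) => [|j r IH].
  under eq_fun do rewrite big_nil; exact: differentiable_cst.
under eq_fun do rewrite big_cons.
have d1 : differentiable (fun s => nth (fun _ => 0) fs j s *: (delta_mx 0 j : 'rV[R]_n)) t.
  by apply: differentiableZl; apply/derivable1_diffP.
exact: (differentiableD d1 IH).
Qed.

Lemma dv_atX (c : R -> R -> R -> R) (q p : R -> R) t :
  smooth3 c -> (forall x, derivable q x 1) -> (forall x, derivable p x 1) ->
  derivable (atX q p c) t 1.
Proof.
move=> hc hq hp.
have E : atX q p c = uncurry3 c \o (fun s => \row_(j < 3) nth (fun _ => 0) [:: id; q; p] j s).
  by apply/funext => s; rewrite /atX /uncurry3 /= !mxE !inordK.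
rewrite E; apply/derivable1_diffP; apply: differentiable_comp; last exact: hc [::] _.
apply: diff_row => -[|[|[|j]]] /=; [exact: dv_id|exact: hq|exact: hp|].
rewrite nth_nil; exact: dv_cst.
Qed.

Lemma dv_atH tau (G : Hfun R) (q p : R -> R) t :
  smooth6 G -> (forall x, derivable q x 1) -> (forall x, derivable p x 1) ->
  derivable (atH tau q p G) t 1.
Proof.
move=> hc hq hp.
have E : atH tau q p G = uncurry6 G \o (fun s => \row_(j < 6) nth (fun _ => 0)
   [:: id; (fun s => s - tau); q; (fun s => q (s - tau)); p; (fun s => p (s - tau))] j s).
  by apply/funext => s; rewrite /atH /uncurry6 /= !mxE !inordK.
rewrite E; apply/derivable1_diffP; apply: differentiable_comp; last exact: hc [::] _.
apply: diff_row => -[|[|[|[|[|[|j]]]]]] /=.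
- exact: dv_id.
- apply: dv_sub; [exact: dv_id|exact: dv_cst].
- exact: hq.
- exact: dv_shift.
- exact: hp.
- exact: dv_shift.
rewrite nth_nil; exact: dv_cst.
Qed.
End Aux.

Theorem proposition2 (R : realType) (tau a1 a2 a3 a4 : R)
  (H : Hfun R) (xi eta nu : R -> R -> R -> R) :
  0 < tau ->
  smooth6 H -> smooth3 xi -> smooth3 eta -> smooth3 nu ->
  (* Omega = 0 identically (along every smooth curve (q, p), at every t) *)
  (forall q p : R -> R, smooth1 q -> smooth1 p ->
     forall t : R, Omega tau a1 a2 a3 a4 H xi eta nu q p t = 0) ->
  forall W : Wfun R,
  (* D(C) = (S_+ - 1) W on the solutions of F_H = 0 *)
  (forall q p : R -> R, smooth1 q -> smooth1 p ->
     (forall t : R, F_H tau a1 a2 a3 a4 H xi eta nu q p t = 0) ->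
     forall t : R,
       Dtot (C_int tau a1 a2 a3 a4 H xi eta q p) t
       = atW tau q p W (t + tau) - atW tau q p W t) ->
  (* then J = P - W satisfies (S_+ - 1) J = 0 on the solutions of F_H = 0 *)
  forall q p : R -> R, smooth1 q -> smooth1 p ->
    (forall t : R, F_H tau a1 a2 a3 a4 H xi eta nu q p t = 0) ->
    forall t : R,
      (P_int tau a1 a2 a4 H xi eta nu q p (t + tau) - atW tau q p W (t + tau))
      - (P_int tau a1 a2 a4 H xi eta nu q p t - atW tau q p W t) = 0.
Proof.
move=> _ hH hxi heta hnu HO W HC q p hq hp HF t.
have dq : forall x, derivable q x 1 := fun x => hq 0%N x.
have dp : forall x, derivable p x 1 := fun x => hp 0%N x.
have dqd : forall x, derivable (qd q) x 1 := fun x => hq 1%N x.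
have dpd : forall x, derivable (pd p) x 1 := fun x => hp 1%N x.
have hC := HC q p hq hp HF t.
have hO := HO q p hq hp t.
have hF := HF t.
have dE : forall x, derivable (atX q p eta) x 1 := fun x => dv_atX _ _ _ x heta dq dp.
have dX : forall x, derivable (atX q p xi) x 1 := fun x => dv_atX _ _ _ x hxi dq dp.
have dHh : forall x, derivable (atH tau q p H) x 1 := fun x => dv_atH _ _ _ _ x hH dq dp.
have dG : forall x, derivable (Gterm tau a2 a4 q p) x 1.
  move=> x; rewrite /Gterm; apply: dv_add.
  - apply: dv_mul; first exact: dv_cst. apply: dv_sub; apply: dv_mul.
    + exact: dp.
    + exact: dqd.
    + apply: dv_shift; exact: dp.
    + apply: dv_shift; exact: dqd.
  - apply: dv_mul; first exact: dv_cst. apply: dv_sub; apply: dv_mul.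
    + apply: dv_shift; exact: dp.
    + exact: dqd.
    + exact: dp.
    + apply: dv_shift; exact: dqd.
pose K := fun s => a4 * p (s + tau) + (a2 + a3) * p s + a1 * p (s - tau).
have dps : forall c x, derivable (fun s => p (s + c)) x 1.
  by move=> c x; apply: dv_shift; exact: dp.
have dK : derivable K t 1.
  rewrite /K; apply: dv_add; first apply: dv_add.
  - apply: dv_mul; [exact: dv_cst| exact: dps].
  - apply: dv_mul; [exact: dv_cst| exact: dp].
  - apply: dv_mul; [exact: dv_cst| exact: dps].
have DK : derive1 K t = a4 * pd p (t + tau) + (a2 + a3) * pd p t + a1 * pd p (t - tau).
  rewrite /K (d1_add (fun s => a4 * p (s + tau) + (a2 + a3) * p s) (fun s => a1 * p (s - tau))).
  rewrite (d1_add (fun s => a4 * p (s + tau)) (fun s => (a2 + a3) * p s)).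
  rewrite (d1_mul (fun=> a4) (fun s => p (s + tau))).
  rewrite (d1_mul (fun=> a2 + a3) p).
  rewrite (d1_mul (fun=> a1) (fun s => p (s - tau))).
  rewrite !d1_cst d1_shift (d1_shift p (- tau)) /pd; first ring.
  - exact: dv_cst.
  - exact: dps.
  - exact: dv_cst.
  - exact: dp.
  - exact: dv_cst.
  - exact: dps.
  - apply: dv_mul; [exact: dv_cst| exact: dps].
  - apply: dv_mul; [exact: dv_cst| exact: dp].
  - apply: dv_add; (apply: dv_mul; first exact: dv_cst); [exact: dps| exact: dp].
  - apply: dv_mul; [exact: dv_cst| exact: dps].
have DC : Dtot (C_int tau a1 a2 a3 a4 H xi eta q p) t =
   Dtot (atX q p eta) t * K t + atX q p eta t * (a4 * pd p (t + tau) + (a2 + a3) * pd p t + a1 * pd p (t - tau))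
   - (Dtot (atX q p xi) t * (Gterm tau a2 a4 q p t + atH tau q p H t)
      + atX q p xi t * (Dtot (Gterm tau a2 a4 q p) t + Dtot (atH tau q p H) t)).
  rewrite -DK /Dtot.
  change (C_int tau a1 a2 a3 a4 H xi eta q p) with
    (fun s => atX q p eta s * K s - atX q p xi s * (Gterm tau a2 a4 q p s + atH tau q p H s)).
  rewrite (d1_sub (fun s => atX q p eta s * K s)
                  (fun s => atX q p xi s * (Gterm tau a2 a4 q p s + atH tau q p H s))).
  cbv beta.
  rewrite (d1_mul (atX q p eta) K).
  cbv beta.
  rewrite (d1_mul (atX q p xi) (fun s => Gterm tau a2 a4 q p s + atH tau q p H s)).
  cbv beta.
  rewrite (d1_add (Gterm tau a2 a4 q p) (atH tau q p H)); first ring.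
  - exact: dG.
  - exact: dHh.
  - exact: dX.
  - apply: dv_add; [exact: dG|exact: dHh].
  - exact: dE.
  - exact: dK.
  - apply: dv_mul; [exact: dE|exact: dK].
  - apply: dv_mul; [exact: dX| apply: dv_add; [exact: dG|exact: dHh]].
have shD : forall c, Dtot (atXm tau q p c) (t + tau) = Dtot (atX q p c) t.
  move=> c; rewrite /Dtot.
  change (atXm tau q p c) with (fun s => atX q p c (s + - tau)).
  by rewrite d1_shift addrK.
have shV : forall c, atXm tau q p c (t + tau) = atX q p c t.
  by move=> c; rewrite /atXm addrK.
have DXm : Dtot (fun s => atX q p xi s - atXm tau q p xi s) t =
    Dtot (atX q p xi) t - Dtot (atXm tau q p xi) t.
  rewrite /Dtot d1_sub //.
  change (derivable (fun s => atX q p xi (s + - tau)) t 1).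
  apply: dv_shift; exact: dX.
transitivity (F_H tau a1 a2 a3 a4 H xi eta nu q p t
   + (Dtot (C_int tau a1 a2 a3 a4 H xi eta q p) t - (atW tau q p W (t + tau) - atW tau q p W t))
   - Omega tau a1 a2 a3 a4 H xi eta nu q p t); last first.
  by rewrite hF hC hO subrr add0r subr0.
set dGt := Dtot (Gterm tau a2 a4 q p) t.
rewrite DC /Omega DXm /F_H /varH_t /varH_q /varH_p /P_int !shD !shV !addrK /K /Gterm.
clearbody dGt.
ring.
Qed.
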